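(* Let $\oplus$ be a combinator whose domain is the set of all pairs of tpos over $W$. Then $\oplus$ is a TeamQueue combinator if and only if $\oplus$ is basic and satisfies ($\oplus$TRI): for every pair $\langle\preceq_1,\preceq_2\rangle$ and every $S \subseteq W$, $\min(\preceq_{1\oplus 2}, S)$ is equal to one of $\min(\preceq_1, S)$, $\min(\preceq_2, S)$, or $\min(\preceq_1, S) \cup \min(\preceq_2, S)$.
   Context: $W$ is a finite nonempty set (of possible worlds). A tpo is a total preorder on $W$. For $S \subseteq W$, $\min(\preceq, S) = \{x \in S : x \preceq y \text{ for all } y \in S\}$. A combinator $\oplus$ maps pairs of tpos $\langle\preceq_1,\preceq_2\rangle$ in its domain to a tpo $\preceq_{1\oplus 2}$. It is basic if $\min(\preceq_{1\oplus 2}, W) = \min(\preceq_1, W) \cup \min(\preceq_2, W)$ for every pair in its domain. $\oplus$ is a TeamQueue combinator if for each pair $\langle\preceq_1,\preceq_2\rangle$ in its domain there is a sequence $\langle a(i)\rangle_{i \in \mathbb{N}}$ (depending on the pair) with $\emptyset \neq a(i) \subseteq \{1,2\}$ for all $i$ and $a(1) = \{1,2\}$, such that $\preceq_{1\oplus 2}$ is the tpo whose ordered partition into ranks (most plausible first) is $\langle T_1, \ldots, T_m\rangle$, where inductively $T_i = \bigcup_{j \in a(i)} \min(\preceq_j, \bigcap_{k<i} T_k^c)$ ($T^c$ the complement in $W$) and $m$ is minimal with $\bigcup_{i \le m} T_i = W$. *)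

(* Defs.v *)
From mathcomp Require Import all_boot.
Set Implicit Arguments. Unset Strict Implicit. Unset Printing Implicit Defensive.

Record tpo (W : finType) := Tpo {
  tpo_le :> rel W;
  tpo_total : total tpo_le;
  tpo_trans : transitive tpo_le }.

Definition minS (W : finType) (r : rel W) (S : {set W}) : {set W} :=
  [set x in S | [forall y in S, r x y]].

Definition combinator (W : finType) := tpo W -> tpo W -> tpo W.

Definition basic (W : finType) (comb : combinator W) : Prop :=
  forall p q : tpo W,
    minS (comb p q) setT = minS p setT :|: minS q setT.

Definition TRI (W : finType) (comb : combinator W) : Prop :=
  forall (p q : tpo W) (S : {set W}),
    minS (comb p q) S = minS p S \/
    minS (comb p q) S = minS q S \/
    minS (comb p q) S = minS p S :|: minS q S.

(* A subset a(i) of {1,2} is encoded as a pair of booleans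
   (1 \in a(i), 2 \in a(i)). *)
Definition block (W : finType) (r1 r2 : rel W) (ab : bool * bool)
    (C : {set W}) : {set W} :=
  (if ab.1 then minS r1 C else set0) :|: (if ab.2 then minS r2 C else set0).

(* cum r1 r2 a n = T_1 ∪ ... ∪ T_n  (the sequence a is indexed from 0,
   so a k plays the role of a(k+1) of the paper, and the block
   T_{k+1} is  block r1 r2 (a k) (~: cum r1 r2 a k)). *)
Fixpoint cum (W : finType) (r1 r2 : rel W) (a : nat -> bool * bool)
    (n : nat) : {set W} :=
  match n with
  | 0 => set0
  | k.+1 => cum r1 r2 a k :|: block r1 r2 (a k) (~: cum r1 r2 a k)
  end.

Definition Tblock (W : finType) (r1 r2 : rel W) (a : nat -> bool * bool)
    (k : nat) : {set W} :=
  block r1 r2 (a k) (~: cum r1 r2 a k).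

(* The tpo r has ordered partition <T_1,...,T_m> (m minimal with
   T_1 ∪ ... ∪ T_m = W): x r y iff the rank of x is at most the rank of y. *)
Definition has_rank_partition (W : finType) (r r1 r2 : rel W)
    (a : nat -> bool * bool) : Prop :=
  exists m : nat,
    cum r1 r2 a m = setT /\
    (forall m', m' < m -> cum r1 r2 a m' != setT) /\
    (forall x y : W, r x y <->
       exists k, k < m /\ x \in Tblock r1 r2 a k /\ y \notin cum r1 r2 a k).

Definition TeamQueue (W : finType) (comb : combinator W) : Prop :=
  forall p q : tpo W,
    exists a : nat -> bool * bool,
      (forall i, (a i).1 || (a i).2) /\
      a 0 = (true, true) /\
      has_rank_partition (comb p q) p q a.

(* Main.v *)
Require Import Defs.
From mathcomp Require Import all_boot.

Set Implicit Arguments. Unset Strict Implicit. Unset Printing Implicit Defensive.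

Section Gen.
Variable W : finType.

Lemma minSP (r : rel W) (S : {set W}) x :
  reflect (x \in S /\ forall y, y \in S -> r x y) (x \in minS r S).
Proof.
rewrite inE; apply: (iffP andP) => [[H /forall_inP F]|[H F]]; split => //.
by apply/forall_inP.
Qed.

Lemma minS_sub (r : rel W) (S : {set W}) : minS r S \subset S.
Proof. by apply/subsetP => x /minSP[]. Qed.

Lemma minS0 (r : rel W) : minS r set0 = set0.
Proof. by apply/setP => x; rewrite !inE. Qed.

Lemma block_sub (r1 r2 : rel W) ab (C : {set W}) : block r1 r2 ab C \subset C.
Proof.
rewrite /block; case: (ab.1); case: (ab.2);
  by rewrite ?setU0 ?set0U ?sub0set ?subUset ?minS_sub.
Qed.

Lemma minS_nonempty (r : tpo W) (S : {set W}) : S != set0 -> exists x, x \in minS r S.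
Proof.
suff: forall n (S : {set W}), #|S| <= n -> S != set0 -> exists x, x \in minS r S.
  by move=> /(_ #|S| S (leqnn _)).
elim=> [|n IH] {}S.
  by rewrite leqn0 cards_eq0 => ->.
move=> Hc /set0Pn [a Ha].
case: (boolP (S :\ a == set0)) => [/eqP E|NE].
  exists a; apply/minSP; split => // y Hy.
  case: (eqVneq y a) => [->|ne]; first by case/orP: (tpo_total r a a).
  have: y \in S :\ a by rewrite !inE ne Hy.
  by rewrite E inE.
have [|x /minSP [Hx xmin]] := IH (S :\ a) _ NE.
  by move: Hc; rewrite (cardsD1 a S) Ha add1n ltnS.
move: Hx; rewrite !inE => /andP[xa xS].
case: (boolP (r x a)) => rxa.
  exists x; apply/minSP; split => // y Hy.
  case: (eqVneq y a) => [->//|ne]; apply: xmin; by rewrite !inE ne Hy.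
have rax : r a x by case/orP: (tpo_total r x a) => // h; rewrite h in rxa.
exists a; apply/minSP; split => // y Hy.
case: (eqVneq y a) => [->|ne]; first by case/orP: (tpo_total r a a).
apply: (@tpo_trans _ r x) => //; apply: xmin; by rewrite !inE ne Hy.
Qed.

Lemma minS_restrict (r : tpo W) (S C : {set W}) :
  S \subset C -> S :&: minS r C != set0 -> minS r S = S :&: minS r C.
Proof.
move=> sub /set0Pn [z]; rewrite inE => /andP [zS /minSP [zC zmin]].
apply/setP => x; rewrite in_setI; apply/idP/idP.
  move=> /minSP [xS xmin]; rewrite xS /=; apply/minSP; split.
    exact: subsetP sub x xS.
  by move=> y yC; apply: (@tpo_trans _ r z) => //; [apply: xmin | apply: zmin].
case/andP => xS /minSP [_ xmin]; apply/minSP; split => // y yS.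
by apply: xmin; apply: subsetP sub y yS.
Qed.

Variables (r1 r2 : rel W) (a : nat -> bool * bool).
Local Notation cum := (cum r1 r2 a).
Local Notation T := (Tblock r1 r2 a).

Lemma cumS n : cum n \subset cum n.+1.
Proof. by rewrite /= subsetUl. Qed.

Lemma cum_mono m n : m <= n -> cum m \subset cum n.
Proof.
elim: n => [|n IH]; first by rewrite leqn0 => /eqP->.
rewrite leq_eqVlt => /orP[/eqP->//|]; rewrite ltnS => /IH H.
exact: subset_trans H (cumS n).
Qed.

Lemma T_cumS k : T k \subset cum k.+1.
Proof. by rewrite /Tblock /= subsetUr. Qed.

Lemma T_notin k x : x \in T k -> x \notin cum k.
Proof. by move=> H; have := subsetP (block_sub _ _ _ _) x H; rewrite inE. Qed.

Lemma cum_T n x : x \in cum n -> exists2 k, k < n & x \in T k.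
Proof.
elim: n => [|n IH] /=; first by rewrite inE.
rewrite inE => /orP [/IH [k lt Hk]|H]; first by exists k => //; exact: ltnW.
by exists n.
Qed.

Lemma T_uniq x k k' : x \in T k -> x \in T k' -> k = k'.
Proof.
move=> H1 H2; case: (ltngtP k k') => // lt.
  have := subsetP (cum_mono lt) x (subsetP (T_cumS k) x H1).
  by rewrite (negbTE (T_notin H2)).
have := subsetP (cum_mono lt) x (subsetP (T_cumS k') x H2).
by rewrite (negbTE (T_notin H1)).
Qed.

Lemma in_cum_T x k n : x \in T k -> (x \in cum n) = (k < n).
Proof.
move=> Hx; apply/idP/idP => [/cum_T [j lt Hj]|lt].
  by rewrite (T_uniq Hx Hj).
exact: subsetP (cum_mono lt) _ (subsetP (T_cumS k) _ Hx).
Qed.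

End Gen.

Section Fwd.
Variable W : finType.

Lemma fwd_min (p q c : tpo W) a m (Hm : cum p q a m = setT)
  (H : forall x y, c x y <->
       exists k, k < m /\ x \in Tblock p q a k /\ y \notin cum p q a k)
  (S : {set W}) x : x \in minS c S ->
  exists k, [/\ S \subset ~: cum p q a k,
                minS c S = S :&: Tblock p q a k & x \in Tblock p q a k].
Proof.
move=> Hx.
have [k lk xk] : exists2 k, k < m & x \in Tblock p q a k.
  by apply: cum_T; rewrite Hm inE.
move: (Hx) => /minSP [xS xmin].
have Ssub : S \subset ~: cum p q a k.
  apply/subsetP => y yS; rewrite inE.
  have [k' [_ [xk' ny]]] := (H x y).1 (xmin y yS).
  by rewrite (T_uniq xk xk').
exists k; split => //; apply/setP => z; rewrite in_setI; apply/idP/idP.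
  move=> /minSP [zS zmin]; rewrite zS /=.
  have [k'' [_ [zk'' nx]]] := (H z x).1 (zmin x xS).
  have nz : z \notin cum p q a k.
    by have := subsetP Ssub z zS; rewrite inE.
  rewrite (in_cum_T _ xk) -leqNgt in nx.
  rewrite (in_cum_T _ zk'') -leqNgt in nz.
  have -> : k = k'' by apply/anti_leq; rewrite nx nz.
  exact: zk''.
case/andP => zS zk; apply/minSP; split => // y yS; apply/(H z y).2.
exists k; split => //; split => //.
by have := subsetP Ssub y yS; rewrite inE.
Qed.

Lemma tri_block (p q : tpo W) ab (C S : {set W}) : S \subset C -> ab.1 || ab.2 ->
  S :&: block p q ab C != set0 ->
  S :&: block p q ab C = minS p S \/ S :&: block p q ab C = minS q S \/
  S :&: block p q ab C = minS p S :|: minS q S.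
Proof.
rewrite /block; case: ab => [[] []] //= sub _; rewrite ?setU0 ?set0U ?setIUr.
- case: (boolP (S :&: minS p C == set0)) => [/eqP P0|P1];
  case: (boolP (S :&: minS q C == set0)) => [/eqP Q0|Q1].
  + by rewrite P0 Q0 setU0 eqxx.
  + by move=> _; right; left; rewrite P0 set0U (minS_restrict sub Q1).
  + by move=> _; left; rewrite Q0 setU0 (minS_restrict sub P1).
  + by move=> _; right; right; rewrite (minS_restrict sub P1) (minS_restrict sub Q1).
- by move=> P1; left; rewrite (minS_restrict sub P1).
- by move=> Q1; right; left; rewrite (minS_restrict sub Q1).
Qed.

End Fwd.

Section Bwd.
Variable W : finType.

Definition chooseab (c p q : rel W) (C : {set W}) : bool * bool :=
  if minS c C == minS p C :|: minS q C then (true, true)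
  else if minS c C == minS p C then (true, false) else (false, true).

Fixpoint cumc (c : rel W) n : {set W} :=
  if n is k.+1 then cumc c k :|: minS c (~: cumc c k) else set0.

Definition aseq (c p q : rel W) k := chooseab c p q (~: cumc c k).

Lemma block_choose (c p q : rel W) (C : {set W}) :
  minS c C = minS p C \/ minS c C = minS q C \/
  minS c C = minS p C :|: minS q C ->
  block p q (chooseab c p q C) C = minS c C.
Proof.
move=> Htri; rewrite /chooseab /block.
case: eqP => [->|h1] /=; first done.
case: eqP => [->|h2] /=; first by rewrite setU0.
rewrite set0U; case: Htri => [E|[E|E]]; [by case: h2 | by [] | by case: h1].
Qed.

Lemma cum_eq (c p q : rel W)
  (Htri : forall C, minS c C = minS p C \/ minS c C = minS q C \/
                    minS c C = minS p C :|: minS q C) n :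
  cum p q (aseq c p q) n = cumc c n.
Proof. by elim: n => //= n IH; rewrite IH /aseq block_choose. Qed.

Lemma cumc_card (c : tpo W) n : cumc c n != setT -> n <= #|cumc c n|.
Proof.
elim: n => // n IH H.
have H' : cumc c n != setT.
  by apply: contra H => /eqP E; rewrite /= E setTU.
apply: leq_ltn_trans (IH H') _; apply: proper_card; apply/properP; split.
  by rewrite /= subsetUl.
have NE : ~: cumc c n != set0.
  apply: contra H' => /eqP E; apply/eqP.
  by rewrite -(setCK (cumc c n)) E setC0.
have [y Hy] := minS_nonempty c NE.
exists y; first by rewrite /= inE Hy orbT.
by have := subsetP (minS_sub _ _) y Hy; rewrite inE.
Qed.

End Bwd.

Theorem proposition4 (W : finType) (HW : 0 < #|W|) (comb : combinator W) :
  TeamQueue comb <-> basic comb /\ TRI comb.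
Proof.
have TNE : [set: W] != set0 by rewrite -cards_eq0 cardsT -lt0n.
split.
  move=> TQ; split.
    move=> p q; have [a [Ha [Ha0 [m [Hm [_ H]]]]]] := TQ p q.
    have [x Hx] := minS_nonempty (comb p q) TNE.
    have [k [Ssub -> _]] := fwd_min Hm H Hx.
    have [y Hy] := minS_nonempty p TNE.
    have y0 : y \in Tblock p q a 0.
      by rewrite /Tblock Ha0 /block /= setC0 inE Hy.
    have : y \notin cum p q a k by have := subsetP Ssub y (in_setT y); rewrite inE.
    rewrite (in_cum_T _ y0) lt0n negbK => /eqP ->.
    by rewrite setTI /Tblock Ha0 /block /= setC0.
  move=> p q S; have [a [Ha [Ha0 [m [Hm [_ H]]]]]] := TQ p q.
  case: (boolP (S == set0)) => [/eqP->|NE]; first by left; rewrite !minS0.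
  have [x Hx] := minS_nonempty (comb p q) NE.
  have [k [Ssub -> xk]] := fwd_min Hm H Hx.
  apply: tri_block; first exact: Ssub.
    exact: Ha.
  apply/set0Pn; exists x; rewrite inE xk andbT.
  by have := subsetP (minS_sub _ _) x Hx.
move=> [Hb Ht] p q.
set c := comb p q.
have Htri : forall C, minS c C = minS p C \/ minS c C = minS q C \/
                    minS c C = minS p C :|: minS q C by move=> C; exact: Ht.
have T_eq : forall k, Tblock p q (aseq c p q) k = minS c (~: cumc c k).
  by move=> k; rewrite /Tblock cum_eq // /aseq block_choose.
exists (aseq c p q); split.
  by move=> i; rewrite /aseq /chooseab; repeat case: ifP.
split.
  by rewrite /aseq /chooseab /= setC0 Hb eqxx.
have Hex : exists n, cumc c n == setT.
  case: (boolP (cumc c #|W|.+1 == setT)) => [E|NE]; first by exists #|W|.+1.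
  have := cumc_card NE.
  by move/leq_trans/(_ (max_card _)); rewrite ltnn.
have [m Hm Hmin] := ex_minnP Hex.
exists m; split; first by rewrite cum_eq //; apply/eqP.
split.
  move=> m' lt; rewrite cum_eq //; apply/negP => E.
  by have := Hmin m' E; rewrite leqNgt lt.
move=> x y; split.
  move=> Hxy.
  have [k lk xk] : exists2 k, k < m & x \in Tblock p q (aseq c p q) k.
    by apply: cum_T; rewrite cum_eq // (eqP Hm) inE.
  exists k; split => //; split => //; apply/negP => yin.
  have [j lj yj] := cum_T yin.
  have xj : x \in Tblock p q (aseq c p q) j.
    rewrite T_eq; apply/minSP; split.
      rewrite inE -(cum_eq Htri) (in_cum_T _ xk) -leqNgt; exact: ltnW.
    move: yj; rewrite T_eq => /minSP [_ ymin] z zin.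
    exact: (@tpo_trans _ c y x z Hxy (ymin z zin)).
  by rewrite (T_uniq xk xj) ltnn in lj.
move=> [k [lk [xk ny]]].
move: xk; rewrite T_eq => /minSP [_ xmin]; apply: xmin.
by rewrite inE -(cum_eq Htri).
Qed.
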